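(* Let $a,b>0$ with $ab\geqslant \frac14 e^2$ and set $c:=\frac{e}{e-1}$. Then $$x\geqslant \left(2^{\log 16}(ab)^{\log(16ab)}\right)^{c^2a}\ \Longrightarrow\ \log x\geqslant a\left(\log(b\log x)\right)^2.$$ *)

(* Defs.v *)
From Stdlib Require Import Reals.
Open Scope R_scope.

(* Main.v *)
Require Import Defs.
From Stdlib Require Import Reals.
Open Scope R_scope.
From Stdlib Require Import Lra Psatz.

Lemma ln_le x y : 0 < x -> x <= y -> ln x <= ln y.
Proof.
  intros hx hxy. destruct (Req_dec x y) as [->|n]; [lra|].
  left; apply ln_increasing; lra.
Qed.

Lemma ln_le_sub1 z : 0 < z -> ln z <= z - 1.
Proof.
  intro hz.
  assert (h : z <= exp (z - 1)).
  { destruct (Req_dec (z - 1) 0) as [e|e].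
    - rewrite e, exp_0; lra.
    - pose proof (exp_ineq1 _ e); lra. }
  rewrite <- (ln_exp (z - 1)). apply ln_le; lra.
Qed.

Theorem lemma1 (a b x : R) (ha : 0 < a) (hb : 0 < b)
  (hab : a * b >= / 4 * (exp 1) ^ 2) :
  let c := exp 1 / (exp 1 - 1) in
  x >= Rpower (Rpower 2 (ln 16) * Rpower (a * b) (ln (16 * a * b))) (c ^ 2 * a) ->
  ln x >= a * (ln (b * ln x)) ^ 2.
Proof.
  intros c hx.
  set (e := exp 1) in *.
  assert (he : 2 < e) by (unfold e; pose proof (exp_ineq1 1); lra).
  set (t := ln 2). set (u := ln (a * b)). set (m := 2 * t + u).
  assert (hab0 : 0 < a * b) by nra.
  assert (h16 : ln 16 = 4 * t).
  { replace 16 with (2 ^ 4) by ring. rewrite ln_pow by lra. simpl; unfold t; ring. }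
  assert (h16ab : ln (16 * a * b) = 4 * t + u).
  { replace (16 * a * b) with (16 * (a * b)) by ring. rewrite ln_mult by lra. rewrite h16; reflexivity. }
  assert (hm : m = ln (4 * (a * b))).
  { rewrite ln_mult by lra. replace 4 with (2*2) by ring. rewrite ln_mult by lra.
    unfold m, t, u; ring. }
  assert (hm2 : 2 <= m).
  { rewrite hm. replace 2 with (ln (e ^ 2)).
    - apply ln_le. nra. nra.
    - rewrite ln_pow by lra. unfold e; rewrite ln_exp; simpl; ring. }
  assert (hc1 : 1 < c).
  { unfold c. apply (Rmult_lt_reg_r (e - 1)); [lra|]. unfold Rdiv.
    rewrite Rmult_assoc, Rinv_l by lra. lra. }
  assert (hcm1 : c - 1 = / (e - 1)).
  { unfold c. field. lra. }
  set (L := ln x).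
  assert (hL : L >= c ^ 2 * a * m ^ 2).
  { unfold Rpower in hx. rewrite <- exp_plus, ln_exp in hx.
    rewrite h16, h16ab in hx. fold u in hx. fold t in hx.
    assert (hx' : exp (c ^ 2 * a * (4 * t * t + (4 * t + u) * u)) <= x) by lra.
    pose proof (exp_pos (c ^ 2 * a * (4 * t * t + (4 * t + u) * u))).
    apply ln_le in hx'; [|assumption]. rewrite ln_exp in hx'. unfold L, m. nra. }
  set (s := sqrt (L / a)).
  assert (hLa : 0 <= L / a).
  { apply Rle_mult_inv_pos; [|lra]. pose proof (pow2_ge_0 (c * m)). nra. }
  assert (hsL : L = a * s ^ 2).
  { unfold s. simpl. rewrite Rmult_1_r, sqrt_sqrt by assumption. field. lra. }
  assert (hscm : c * m <= s).
  { unfold s. rewrite <- (sqrt_pow2 (c * m)) by nra. apply sqrt_le_1_alt.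
    apply (Rmult_le_reg_r a); [lra|]. unfold Rdiv. rewrite Rmult_assoc, Rinv_l by lra. nra. }
  clearbody s L.
  assert (hs0 : 0 < s) by nra.
  assert (hbL : ln (b * L) = m - 2 * t + 2 * ln s).
  { rewrite hsL. replace (b * (a * s ^ 2)) with ((a * b) * (s * s)) by ring.
    rewrite (ln_mult (a * b)), (ln_mult s s) by nra. unfold m, u; ring. }
  set (z := (c - 1) * m / 2).
  assert (hz : 0 < z) by (unfold z; nra).
  assert (hcmz : c * m = 2 * e * z).
  { unfold z. rewrite hcm1. unfold c. field. lra. }
  assert (hlncm : ln (c * m) <= t + z).
  { rewrite hcmz. rewrite ln_mult, ln_mult by nra. unfold e; rewrite ln_exp.
    pose proof (ln_le_sub1 z hz). fold t. lra. }
  assert (hlns : ln s <= ln (c * m) + (s - c * m) / 2).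
  { assert (hq : 0 < s / (c * m)) by (apply Rdiv_lt_0_compat; nra).
    pose proof (ln_le_sub1 _ hq) as H.
    unfold Rdiv in H. rewrite ln_mult in H by (try apply Rinv_0_lt_compat; nra).
    rewrite ln_Rinv in H by nra.
    assert (s * / (c * m) - 1 <= (s - c * m) / 2).
    { assert (s * / (c * m) - 1 = (s - c * m) / (c * m)) by (field; nra).
      rewrite H0. apply Rmult_le_compat_l; [lra|]. apply Rinv_le_contravar; nra. }
    lra. }
  assert (hup : ln (b * L) <= s).
  { rewrite hbL. unfold z in hlncm. nra. }
  assert (hlow : 0 <= ln (b * L)).
  { rewrite <- ln_1. apply ln_le; [lra|]. rewrite hsL.
    assert (2 <= s) by nra.
    assert (1 <= a * b) by nra.
    assert (4 <= s ^ 2) by nra.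
    replace (b * (a * s ^ 2)) with ((a * b) * s ^ 2) by ring. nra. }
  set (l := ln (b * L)) in *. clearbody l.
  rewrite hsL. assert (l ^ 2 <= s ^ 2) by nra. nra.
Qed.
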